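(* Let $\varrho=\sum_{\omega\in\Omega}\varrho(\omega)|\omega\rangle\langle\omega|$ and $\sigma=\sum_{\omega\in\Omega}\sigma(\omega)|\omega\rangle\langle\omega|$ be unequal commuting density operators, diagonal in a common orthonormal basis $(|\omega\rangle)_{\omega\in\Omega}$ of a finite-dimensional Hilbert space. Assume there is a subset $\Omega_0\subseteq\Omega$, with $\Omega_1:=\Omega\setminus\Omega_0$, such that $\sigma(\Omega_0)\varrho(\omega)=\varrho(\Omega_0)\sigma(\omega)$ for $\omega\in\Omega_0$ and $\sigma(\Omega_1)\varrho(\omega)=\varrho(\Omega_1)\sigma(\omega)$ for $\omega\in\Omega_1$, and $\varrho(\Omega_k)\neq0$, $\sigma(\Omega_k)\ne0$ for $k=0,1$. Then \[ \overline{D}_\alpha^{\mathrm{test}}(\varrho\|\sigma)<\hat D_\alpha^{\mathrm{test}}(\varrho\|\sigma)=D_\alpha(\varrho\|\sigma),\qquad \alpha\in(0,1). \] In particular, this holds for any two unequal commuting qubit states with full support.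
   Context: $\varrho(\Omega_0):=\sum_{\omega\in\Omega_0}\varrho(\omega)$, etc. For probability vectors $p,q$ and $\alpha\in(0,1)$, $D_\alpha(p\|q)=\frac{1}{\alpha-1}\log\sum_\omega p(\omega)^\alpha q(\omega)^{1-\alpha}$; for commuting states $D_\alpha(\varrho\|\sigma)$ is the classical divergence of the eigenvalue vectors. A test is an operator $0\le T\le I$; $\mathcal T(X):=(\operatorname{Tr}XT,\operatorname{Tr}X(I-T))$. $D_\alpha^{\mathrm{test}}(\varrho\|\sigma):=\max_{0\le T\le I}D_\alpha(\mathcal T(\varrho)\|\mathcal T(\sigma))$, $\overline{D}_\alpha^{\mathrm{test}}(\varrho\|\sigma):=\limsup_{n\to\infty}\frac1n D_\alpha^{\mathrm{test}}(\varrho^{\otimes n}\|\sigma^{\otimes n})$, and $\hat D_\alpha^{\mathrm{test}}(\varrho\|\sigma):=\sup_{n\in\mathbb N}\frac1n D_\alpha^{\mathrm{test}}(\varrho^{\otimes n}\|\sigma^{\otimes n})$. *)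

(* Defs.v *)
From HB Require Import structures.
From mathcomp Require Import all_boot all_order all_algebra.
From mathcomp Require Import all_classical all_reals all_analysis.
From mathcomp Require Import complex mxtens.

Set Implicit Arguments.
Unset Strict Implicit.
Unset Printing Implicit Defensive.

Import Order.TTheory GRing.Theory Num.Theory.
Local Open Scope ring_scope.

Section QDefs.
Variable R : realType.
Local Notation C := (R[i]).

Definition diag_state (d : nat) (p : 'I_d -> R) : 'M[C]_d :=
  diag_mx (\row_i (Complex (p i) 0)).

Definition prob_vec (d : nat) (p : 'I_d -> R) : Prop :=
  (forall i, 0 <= p i) /\ \sum_i p i = 1.

(* positive semidefinite: v^* A v >= 0 (i.e. real and nonnegative) for all v *)
Definition psd (n : nat) (A : 'M[C]_n) : Prop :=
  forall v : 'I_n -> C, 0 <= \sum_i \sum_j (v i)^* * A i j * v j.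

Definition is_test (n : nat) (T : 'M[C]_n) : Prop := psd T /\ psd (1%:M - T).

Definition Dcl (I : finType) (a : R) (p q : I -> R) : \bar R :=
  let s := \sum_i (p i `^ a * q i `^ (1 - a)) in
  if s == 0 then +oo%E else ((a - 1)^-1 * ln s)%:E.

Definition test_meas (n : nat) (X T : 'M[C]_n) : bool -> R :=
  fun b => if b then complex.Re (\tr (X *m T))
           else complex.Re (\tr (X *m (1%:M - T))).

Definition Dtest (n : nat) (a : R) (rho sigma : 'M[C]_n) : \bar R :=
  ereal_sup [set Dcl a (test_meas rho T) (test_meas sigma T)
            | T in [set T : 'M[C]_n | is_test T]].

Definition Dtest_bar (d : nat) (a : R) (rho sigma : 'M[C]_d) : \bar R :=
  limn_esup (fun n : nat =>
    ((n%:R)^-1)%:E * Dtest a (rho ^t n) (sigma ^t n))%E.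

Definition Dtest_hat (d : nat) (a : R) (rho sigma : 'M[C]_d) : \bar R :=
  ereal_sup [set (((n%:R)^-1)%:E * Dtest a (rho ^t n) (sigma ^t n))%E
            | n in [set n : nat | (0 < n)%N]].

End QDefs.

(* Main.v *)
Require Import Defs.
From HB Require Import structures.
From mathcomp Require Import all_boot all_order all_algebra.
From mathcomp Require Import all_classical all_reals all_analysis.
From mathcomp Require Import complex mxtens.
From mathcomp Require Import lra ring.

Import Order.TTheory GRing.Theory Num.Theory.
Local Open Scope ring_scope.

Arguments mxtens_index {m n}.
Arguments mxtens_unindex {m n}.
Section TP.
Variable R : realType.
Variable d : nat.

Fixpoint tp (f : 'I_d -> R) k : 'I_(d ^ k.+1) -> R :=
  match k return 'I_(d ^ k.+1) -> R with
  | 0 => fun x => f x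
  | k'.+1 => fun x => f (@mxtens_unindex d (d ^ k'.+1) x).1 *
                      tp f k' (@mxtens_unindex d (d ^ k'.+1) x).2
  end.

Lemma tpS f k x : tp f k.+1 x = f (@mxtens_unindex d (d ^ k.+1) x).1 *
                      tp f k (@mxtens_unindex d (d ^ k.+1) x).2.
Proof. by []. Qed.
Lemma tp0 f x : tp f 0 x = f x.
Proof. by []. Qed.
Arguments tp : simpl never.

Lemma sum_tens m (F : 'I_(d * m) -> R) :
  \sum_x F x = \sum_(i < d) \sum_(j < m) F (mxtens_index (i, j)).
Proof.
rewrite pair_big /= (reindex mxtens_index) /=; last first.
  by exists mxtens_unindex => i _; rewrite (mxtens_indexK, mxtens_unindexK).
by apply: eq_bigr => -[i j].
Qed.

Lemma tp_sum f k : \sum_x tp f k x = (\sum_i f i) ^+ k.+1.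
Proof.
elim: k => [|k IH]; first by rewrite expr1.
rewrite exprS -IH mulr_suml.
rewrite (@sum_tens (d ^ k.+1) (tp f k.+1)); apply: eq_bigr => i _; rewrite mulr_sumr.
by apply: eq_bigr => j _; rewrite tpS mxtens_indexK.
Qed.

Lemma tp_mul f g k x : tp (fun i => f i * g i) k x = tp f k x * tp g k x.
Proof.
elim: k x => [|k IH] x; first by rewrite !tp0.
by rewrite !tpS IH mulrACA.
Qed.

Lemma tp_ge0 f k x : (forall i, 0 <= f i) -> 0 <= tp f k x.
Proof. by move=> h; elim: k x => [|k IH] x; rewrite ?tp0 ?tpS ?mulr_ge0. Qed.

Lemma tp_diag f k : diag_state f ^t k.+1 = diag_state (tp f k).
Proof.
elim: k => [|k IH]; first by [].
have -> : diag_state f ^t k.+2 = diag_state f *t diag_state f ^t k.+1 by [].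
rewrite IH; apply/matrixP => i j.
case: (mxtens_indexP i) => i1 i2; case: (mxtens_indexP j) => j1 j2.
rewrite tensmxE /diag_state !mxE tpS mxtens_indexK /=.
rewrite (inj_eq (can_inj (@mxtens_indexK d (d ^ k.+1)))) xpair_eqE.
case: (i1 =P j1) => _; case: (i2 =P j2) => _ /=; rewrite ?mulr0n ?mul0r ?mulr0 ?mulr1n //.
by simpc.
Qed.

Fixpoint tK (A : {set 'I_d}) k : 'I_(d ^ k.+1) -> nat :=
  match k return 'I_(d ^ k.+1) -> nat with
  | 0 => fun x => nat_of_bool (x \in A)
  | k'.+1 => fun x => (nat_of_bool ((@mxtens_unindex d (d ^ k'.+1) x).1 \in A) +
                      tK A k' (@mxtens_unindex d (d ^ k'.+1) x).2)%N
  end.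

Lemma tKS A k x : tK A k.+1 x = (nat_of_bool ((@mxtens_unindex d (d ^ k.+1) x).1 \in A) +
                      tK A k (@mxtens_unindex d (d ^ k.+1) x).2)%N.
Proof. by []. Qed.
Lemma tK0 A (x : 'I_d) : tK A 0 x = nat_of_bool (x \in A).
Proof. by []. Qed.
Arguments tK : simpl never.

Lemma tK_le (A : {set 'I_d}) k x : (tK A k x <= k.+1)%N.
Proof.
elim: k x => [|k IH] x; first by rewrite tK0; case: (_ \in _).
rewrite tKS; move: (IH (@mxtens_unindex d (d ^ k.+1) x).2).
by case: (_ \in _) => /=; rewrite ?add1n ?add0n // => h; apply: leqW.
Qed.

Lemma tp_ind (A : {set 'I_d}) (c0 c1 : R) k x :
  tp (fun i => if i \in A then c0 else c1) k x = c0 ^+ tK A k x * c1 ^+ (k.+1 - tK A k x).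
Proof.
elim: k x => [|k IH] x.
  by rewrite tp0 tK0; case: (x \in A); rewrite /= ?expr1 ?expr0 ?mulr1 ?mul1r.
rewrite tpS tKS IH; set y := (@mxtens_unindex d (d ^ k.+1) x).
have hle := tK_le A k y.2.
case: (y.1 \in A).
  by rewrite (_ : nat_of_bool true = 1%N) // add1n subSS exprS mulrA.
by rewrite (_ : nat_of_bool false = 0%N) // add0n (subSn hle) exprS mulrCA.
Qed.

Lemma tp_powR f u k x : (forall i, 0 <= f i) -> (tp f k x) `^ u = tp (fun i => f i `^ u) k x.
Proof.
move=> f0; elim: k x => [|k IH] x; first by rewrite !tp0.
by rewrite !tpS powRM ?tp_ge0 // IH.
Qed.

Lemma tp_ext f g k x : f =1 g -> tp f k x = tp g k x.
Proof. by move=> fg; elim: k x => [|k IH] x; rewrite ?tp0 ?tpS ?fg ?IH. Qed.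

End TP.

Section TM.
Variable R : realType.

Lemma Re_sum n (F : 'I_n -> R[i]) : complex.Re (\sum_i F i) = \sum_i complex.Re (F i).
Proof.
apply: (big_ind2 (fun (z : R[i]) (r : R) => complex.Re z = r)) => //.
by move=> [? ?] ? [? ?] ? /= <- <-.
Qed.

Lemma Re_rmul (x : R) (z : R[i]) : complex.Re (x%:C%C * z) = x * complex.Re z.
Proof. by case: z => a b /=; rewrite mul0r subr0. Qed.

Lemma test_meas_diag n (P : 'I_n -> R) (T : 'M[R[i]]_n) :
  test_meas (diag_state P) T true = \sum_i P i * complex.Re (T i i) /\
  test_meas (diag_state P) T false = \sum_i P i * (1 - complex.Re (T i i)).
Proof.
rewrite /test_meas /diag_state !mul_diag_mx /mxtrace !Re_sum; split; apply: eq_bigr => i _; rewrite !mxE /= ?eqxx.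
  by rewrite Re_rmul.
by rewrite Re_rmul; case: (T i i) => ? ? /=.
Qed.


Lemma psd_Re n (T : 'M[R[i]]_n) i : psd T -> 0 <= complex.Re (T i i).
Proof.
move=> /(_ (fun j => (j == i)%:R)).
rewrite (bigD1 i) //= (bigD1 i) //= eqxx.
rewrite [X in _ + X + _]big1; last by move=> j /negbTE ->; rewrite mulr0.
rewrite [X in _ + X]big1; last first.
  by move=> a /negbTE ->; rewrite conjC0 big1 // => b _; rewrite !mul0r.
rewrite conjC1 mul1r mulr1 !addr0 lecE => /andP[_ h].
by move: h; rewrite /=.
Qed.

Lemma psd_Re1 n (T : 'M[R[i]]_n) i : psd (1%:M - T) -> complex.Re (T i i) <= 1.
Proof.
move=> H; have := @psd_Re _ _ i H; rewrite !mxE eqxx /=.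
by case: (T i i) => a b /=; rewrite subr_ge0.
Qed.

Lemma psd_diag n (g : 'I_n -> R) : (forall i, 0 <= g i) -> psd (diag_state g).
Proof.
move=> g0 v; apply: sumr_ge0 => i _.
rewrite (bigD1 i) //= big1 => [|j /negbTE ne]; last by rewrite !mxE eq_sym ne mulr0n mulr0 mul0r.
rewrite addr0 !mxE eqxx mulr1n mulrAC.
by apply: mulr_ge0; [rewrite mulrC mul_conjC_ge0 | rewrite lecE /= eqxx g0].
Qed.

Lemma diag_state_sub n (g : 'I_n -> R) : 1%:M - diag_state g = diag_state (fun i => 1 - g i).
Proof.
apply/matrixP => i j; rewrite !mxE; case: eqP => _ /=; rewrite ?mulr1n ?mulr0n ?subr0 //.
by simpc.
Qed.

End TM.

Section F.
Variable R : realType.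
Variable al : R.
Hypothesis hal : 0 < al < 1.

Definition ff (x y : R) := x `^ al * y `^ (1 - al).

Lemma al_gt0 : 0 < al. Proof. by case/andP: hal. Qed.
Lemma al_lt1 : al < 1. Proof. by case/andP: hal. Qed.
Lemma al1_gt0 : 0 < 1 - al. Proof. by rewrite subr_gt0 al_lt1. Qed.

Lemma ff_ge0 x y : 0 <= ff x y.
Proof. by rewrite mulr_ge0 ?powR_ge0. Qed.

Lemma powR_alK x : 0 <= x -> x `^ al * x `^ (1 - al) = x.
Proof.
move=> x0; rewrite -powRD; last by rewrite addrC subrK oner_eq0.
by rewrite addrC subrK powRr1.
Qed.

Lemma ff_hom w x y : 0 <= w -> 0 <= x -> 0 <= y -> ff (w * x) (w * y) = w * ff x y.
Proof.
move=> w0 x0 y0; rewrite /ff !powRM // mulrACA powR_alK //.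
Qed.

Lemma ff_prop l y : 0 <= l -> 0 <= y -> ff (l * y) y = l `^ al * y.
Proof. by move=> l0 y0; rewrite /ff powRM // -mulrA powR_alK. Qed.

Lemma ff1l y : ff 1 y = y `^ (1 - al). Proof. by rewrite /ff powR1 mul1r. Qed.
Lemma ffr1 x : ff x 1 = x `^ al. Proof. by rewrite /ff powR1 mulr1. Qed.

Lemma ff_le x1 x2 y1 y2 : 0 <= x1 -> 0 <= y1 -> x1 <= x2 -> y1 <= y2 -> ff x1 y1 <= ff x2 y2.
Proof.
move=> x10 y10 hx hy; rewrite /ff; apply: ler_pM; rewrite ?powR_ge0 //.
  exact: (@ge0_ler_powR R al (ltW al_gt0) x1 x2 x10 (le_trans x10 hx) hx).
exact: (@ge0_ler_powR R (1 - al) (ltW al1_gt0) y1 y2 y10 (le_trans y10 hy) hy).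
Qed.

Lemma ff_super x1 x2 y1 y2 : 0 <= x1 -> 0 <= x2 -> 0 <= y1 -> 0 <= y2 ->
  ff x1 y1 + ff x2 y2 <= ff (x1 + x2) (y1 + y2).
Proof.
move=> x10 x20 y10 y20.
have a0 := al_gt0; have a10 := al1_gt0.
have := @hoelder2 R (x1 `^ al) (x2 `^ al) (y1 `^ (1 - al)) (y2 `^ (1 - al)) al^-1 (1 - al)^-1.
rewrite !powR_ge0 !invr_gt0 a0 a10 !invrK addrC subrK => /(_ isT isT isT isT isT isT erefl).
have K z b : 0 <= z -> 0 < b -> (z `^ b) `^ b^-1 = z.
  by move=> z0 b0; rewrite -powRrM mulfV ?gt_eqF // powRr1.
by rewrite !K.
Qed.

Lemma ff_sum (I : Type) (r : seq I) (x y : I -> R) :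
  (forall i, 0 <= x i) -> (forall i, 0 <= y i) ->
  \sum_(i <- r) ff (x i) (y i) <= ff (\sum_(i <- r) x i) (\sum_(i <- r) y i).
Proof.
move=> x0 y0; elim: r => [|j r IH]; first by rewrite !big_nil ff_ge0.
rewrite !big_cons; apply: (le_trans _ (ff_super _ _ _ _ (x0 j) (sumr_ge0 _ (fun i _ => x0 i)) (y0 j) (sumr_ge0 _ (fun i _ => y0 i)))).
by rewrite lerD2l.
Qed.

Lemma dproc (X : finType) (P Q w : X -> R) :
  (forall x, 0 <= P x) -> (forall x, 0 <= Q x) -> (forall x, 0 <= w x <= 1) ->
  \sum_x ff (P x) (Q x) <=
  ff (\sum_x P x * w x) (\sum_x Q x * w x) +
  ff (\sum_x P x * (1 - w x)) (\sum_x Q x * (1 - w x)).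
Proof.
move=> P0 Q0 w01.
have w0 x : 0 <= w x by case/andP: (w01 x).
have w1 x : 0 <= 1 - w x by rewrite subr_ge0; case/andP: (w01 x).
have h1 x : 0 <= P x * w x by rewrite mulr_ge0.
have h2 x : 0 <= Q x * w x by rewrite mulr_ge0.
have h3 x : 0 <= P x * (1 - w x) by rewrite mulr_ge0.
have h4 x : 0 <= Q x * (1 - w x) by rewrite mulr_ge0.
apply: (le_trans _ (lerD (ff_sum _ _ _ _ h1 h2) (ff_sum _ _ _ _ h3 h4))).
rewrite -big_split /=; apply: ler_sum => x _.
rewrite ![_ * w x]mulrC ![_ * (1 - w x)]mulrC !ff_hom //.
by rewrite -mulrDl addrC subrK mul1r.
Qed.


Lemma sum_sub_le (X : finType) (A : pred X) (F : X -> R) :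
  (forall x, 0 <= F x) -> \sum_(x | A x) F x <= \sum_x F x.
Proof.
by move=> F0; rewrite [X in _ <= X](bigID A) /= lerDl sumr_ge0.
Qed.

Lemma key_half c1 c2 x y : 0 <= x -> 0 <= y -> 2^-1 * x <= c1 -> 2^-1 * y <= c2 ->
  2^-1 * ff x y <= ff c1 c2.
Proof.
move=> x0 y0 h1 h2; rewrite -ff_hom ?invr_ge0 ?ler0n //.
by apply: ff_le => //; rewrite mulr_ge0 ?invr_ge0 ?ler0n.
Qed.

Lemma class_bound (X : finType) (P Q w : X -> R) (A : pred X) (rho : R) :
  (forall x, 0 <= P x) -> (forall x, 0 <= Q x) -> (forall x, 0 <= w x <= 1) ->
  \sum_x P x = 1 -> \sum_x Q x = 1 -> 0 <= rho ->
  (forall x, A x -> P x = rho * Q x) ->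
  let O := ff (\sum_x P x * w x) (\sum_x Q x * w x) +
           ff (\sum_x P x * (1 - w x)) (\sum_x Q x * (1 - w x)) in
  2^-1 * (rho * \sum_(x | A x) Q x) `^ al <= O \/
  2^-1 * (\sum_(x | A x) Q x) `^ (1 - al) <= O.
Proof.
move=> P0 Q0 w01 P1 Q1 rho0 HA O.
have w0 x : 0 <= w x by case/andP: (w01 x).
have w1 x : 0 <= 1 - w x by rewrite subr_ge0; case/andP: (w01 x).
set b := \sum_(x | A x) Q x.
set r := \sum_x P x * w x; set s := \sum_x Q x * w x.
set r' := \sum_x P x * (1 - w x); set s' := \sum_x Q x * (1 - w x).
set m1 := \sum_(x | A x) Q x * w x; set m2 := \sum_(x | A x) Q x * (1 - w x).
have split1 (F : X -> R) (B : pred X) : \sum_(x | B x) F x * w x + \sum_(x | B x) F x * (1 - w x) = \sum_(x | B x) F x.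
  by rewrite -big_split /=; apply: eq_bigr => x _; rewrite -mulrDr addrC subrK mulr1.
have hr : r + r' = 1 by rewrite /r /r' split1.
have hs : s + s' = 1 by rewrite /s /s' split1.
have hm : m1 + m2 = b by rewrite /m1 /m2 split1.
have hrho (F : X -> R) : rho * \sum_(x | A x) Q x * F x = \sum_(x | A x) P x * F x.
  by rewrite mulr_sumr; apply: eq_bigr => x Ax; rewrite (HA x Ax) mulrA.
have hr1 : rho * m1 <= r by rewrite /m1 hrho sum_sub_le // => x; rewrite mulr_ge0.
have hr2 : rho * m2 <= r' by rewrite /m2 hrho sum_sub_le // => x; rewrite mulr_ge0.
have hs1 : m1 <= s by rewrite sum_sub_le // => x; rewrite mulr_ge0.
have hs2 : m2 <= s' by rewrite sum_sub_le // => x; rewrite mulr_ge0.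
have m10 : 0 <= m1 by rewrite sumr_ge0 // => x _; rewrite mulr_ge0.
have m20 : 0 <= m2 by rewrite sumr_ge0 // => x _; rewrite mulr_ge0.
have b0 : 0 <= b by rewrite sumr_ge0.
have b1 : b <= 1 by rewrite -Q1 sum_sub_le.
have bp1 : b `^ (1 - al) <= 1.
  have := @ge0_ler_powR R (1 - al) (ltW al1_gt0) b 1 b0 ler01 b1.
  by rewrite /= powR1.
have O1 : ff r s <= O by rewrite /O lerDl ff_ge0.
have O2 : ff r' s' <= O by rewrite /O lerDr ff_ge0.
have rb0 : 0 <= rho * b by rewrite mulr_ge0.
have hhalf (z : R) : 2^-1 * z <= 2^-1 -> 2^-1 * z <= 2^-1 * 1 by rewrite mulr1.
have [hr12|hr12] : 2^-1 <= r \/ 2^-1 <= r'.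
  case: (lerP (2^-1) r) => h; [by left | right; lra].
all: have [hs12|hs12] : 2^-1 <= s \/ 2^-1 <= s' by
  case: (lerP (2^-1) s) => h; [by left | right; lra].
all: have [hm1|hm2] : 2^-1 * b <= m1 \/ 2^-1 * b <= m2 by
  case: (lerP (2^-1 * b) m1) => h; [by left | right; lra].
- right; apply: le_trans O1; rewrite -ff1l; apply: key_half => //; lra.
- right; apply: le_trans O1; rewrite -ff1l; apply: key_half => //; lra.
- right; apply: le_trans O1; rewrite -ff1l; apply: key_half => //; lra.
- left; apply: le_trans O2; rewrite -ffr1; apply: key_half => //; try lra.
  by apply: le_trans hr2; rewrite mulrA [_ * rho]mulrC -mulrA ler_wpM2l.
- left; apply: le_trans O1; rewrite -ffr1; apply: key_half => //; try lra.
  by apply: le_trans hr1; rewrite mulrA [_ * rho]mulrC -mulrA ler_wpM2l.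
- right; apply: le_trans O2; rewrite -ff1l; apply: key_half => //; lra.
- right; apply: le_trans O2; rewrite -ff1l; apply: key_half => //; lra.
- right; apply: le_trans O2; rewrite -ff1l; apply: key_half => //; lra.
Qed.


Lemma single_le (m : nat) (F : 'I_m -> R) k : (forall j, 0 <= F j) -> F k <= \sum_j F j.
Proof. by move=> F0; rewrite (bigD1 k) //= lerDl sumr_ge0. Qed.

Lemma ln_powRM (x u y : R) : 0 < x -> 0 < y -> ln (x `^ u * y) = u * ln x + ln y.
Proof. by move=> x0 y0; rewrite lnM ?posrE ?powR_gt0 // ln_powR. Qed.

Lemma pick_class m (n : nat) (rho b : 'I_m -> R) (s1 Sb Sg : R) :
  (0 < m)%N -> (forall k, 0 <= rho k) -> (forall k, 0 <= b k) ->
  0 < s1 -> 0 < Sb -> 0 < Sg ->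
  \sum_k rho k `^ al * b k = s1 ^+ n ->
  \sum_k rho k `^ (al / 2) * b k = Sb ^+ n ->
  \sum_k rho k `^ ((1 + al) / 2) * b k = Sg ^+ n ->
  exists k, 0 < rho k /\ 0 < b k /\
   n%:R * ((2 - al) * ln s1 - 2 * (1 - al) * ln Sb) - 2 * ln (m%:R : R) <= al * ln (rho k * b k) /\
   n%:R * ((1 + al) * ln s1 - 2 * al * ln Sg) - 2 * ln (m%:R : R) <= (1 - al) * ln (b k).
Proof.
move=> m0 rho0 b0 s10 Sb0 Sg0 Ha Hb Hg.
have mR : 0 < (m%:R : R) by rewrite ltr0n.
set c := s1 ^+ n / m%:R.
have c0 : 0 < c by rewrite divr_gt0 // exprn_gt0.
have [k hk] : exists k, c <= rho k `^ al * b k.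
  case: (boolP [exists k, c <= rho k `^ al * b k]) => [/existsP//|/existsPn H].
  exfalso; have : \sum_k rho k `^ al * b k < \sum_(k < m) c.
    apply: ltr_sum; last by move=> k _; rewrite ltNge H.
    by apply/hasP; exists (Ordinal m0); rewrite ?mem_index_enum.
  by rewrite Ha sumr_const card_ord -mulr_natr divfK ?gt_eqF // ltxx.
have T0 : 0 < rho k `^ al * b k by apply: lt_le_trans hk.
have rk0 : 0 < rho k.
  rewrite lt_def rho0 andbT; apply/negP => /eqP e.
  by move: T0; rewrite e powR0 ?mul0r ?ltxx // gt_eqF // al_gt0.
have bk0 : 0 < b k.
  rewrite lt_def b0 andbT; apply/negP => /eqP e.
  by move: T0; rewrite e mulr0 ltxx.
have Fb : rho k `^ (al / 2) * b k <= Sb ^+ n.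
  by rewrite -Hb single_le // => j; rewrite mulr_ge0 ?powR_ge0.
have Fg : rho k `^ ((1 + al) / 2) * b k <= Sg ^+ n.
  by rewrite -Hg single_le // => j; rewrite mulr_ge0 ?powR_ge0.
have L1 : n%:R * ln s1 - ln (m%:R : R) <= al * ln (rho k) + ln (b k).
  rewrite -ln_powRM //; have : ln c <= ln (rho k `^ al * b k) by rewrite ler_ln ?posrE.
  by rewrite mulr_natl /c ln_div ?posrE ?exprn_gt0 // lnXn // => h.
have L2 : (al / 2) * ln (rho k) + ln (b k) <= n%:R * ln Sb.
  rewrite -ln_powRM // mulr_natl -lnXn //.
  by rewrite ler_ln ?posrE ?exprn_gt0 ?mulr_gt0 ?powR_gt0.
have L3 : ((1 + al) / 2) * ln (rho k) + ln (b k) <= n%:R * ln Sg.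
  rewrite -ln_powRM // mulr_natl -lnXn //.
  by rewrite ler_ln ?posrE ?exprn_gt0 ?mulr_gt0 ?powR_gt0.
have lm0 : 0 <= ln (m%:R : R) by rewrite ln_ge0 // ler1n.
have a0 := al_gt0; have a1 := al_lt1.
exists k; split => //; split => //.
rewrite lnM ?posrE //.
move: L1 L2 L3 lm0.
set l := ln (rho k); set B := ln (b k); set lm := ln (m%:R : R).
set L1 := ln s1; set Lb := ln Sb; set Lg := ln Sg; set N := (n%:R : R).
move=> F1 F2 F3 lm0.
split.
  have h1 : 0 <= (1 - al) * (2 * (N * Lb) - (al * l + B) - B) by rewrite mulr_ge0 //; lra.
  have h2 : 0 <= (2 - al) * (al * l + B - (N * L1 - lm)) by rewrite mulr_ge0 //; lra.
  have h3 : 0 <= al * lm by rewrite mulr_ge0 //; lra.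
  lra.
have h1 : 0 <= al * (2 * (N * Lg) - (al * l + B) - (l + B)) by rewrite mulr_ge0 //; lra.
have h2 : 0 <= (1 + al) * (al * l + B - (N * L1 - lm)) by rewrite mulr_ge0 //; lra.
have h3 : 0 <= (1 - al) * lm by rewrite mulr_ge0 //; lra.
lra.
Qed.

End F.

Section L.
Variable R : realType.

Lemma limsup_le (u : (\bar R)^nat) (l : \bar R) N :
  (forall n, (N <= n)%N -> (u n <= l)%E) -> (limn_esup u <= l)%E.
Proof.
move=> H; rewrite limn_esup_lim.
rewrite (cvg_lim _ (ereal_nonincreasing_cvgn (nonincreasing_esups u))) //.
apply: le_trans (ereal_inf_lbound _) _; first by exists N.
rewrite /esups /=; apply: ub_ereal_sup => _ [n hn <-]; exact: H.
Qed.

Lemma ln_small (dl : R) : 0 < dl -> exists N, forall n, (N <= n)%N ->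
  ln (n.+1%:R : R) <= dl * n%:R.
Proof.
move=> d0; exists (Num.truncn (2 / dl ^+ 2)).+1 => n hn.
have hn' : 2 / dl ^+ 2 < n%:R.
  apply: lt_le_trans (truncnS_gt _) _; by rewrite ler_nat.
have n0 : 0 <= (n%:R : R) by [].
rewrite -[X in _ <= X]expRK ler_ln ?posrE ?ltr0n ?expR_gt0 //.
apply: le_trans (expR_ge1Dxn 1 _); last by rewrite mulr_ge0 // ltW.
rewrite /= -addn1 natrD addrC lerD2l.
have h : 2 <= dl ^+ 2 * n%:R.
  by rewrite -ler_pdivrMl ?exprn_gt0 // mulrC ltW.
rewrite exprMn expr2 -mulrA.
have e : (2`! %:R : R) = 2 by [].
rewrite e; nra.
Qed.
End L.




Lemma var_ineq (R : realType) (w0 w1 x0 x1 : R) : 0 < w0 -> 0 < w1 -> w0 + w1 = 1 -> x0 != x1 ->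
  (w0 * x0 + w1 * x1) ^+ 2 < w0 * x0 ^+ 2 + w1 * x1 ^+ 2.
Proof.
move=> h0 h1 hw hx.
have e : w0 * x0 ^+ 2 + w1 * x1 ^+ 2 - (w0 * x0 + w1 * x1) ^+ 2 = w0 * w1 * (x0 - x1) ^+ 2.
  have -> : w1 = 1 - w0 by lra.
  ring.
rewrite -subr_gt0 e; apply: mulr_gt0; first exact: mulr_gt0.
by rewrite lt_def sqr_ge0 andbT sqrf_eq0 subr_eq0.
Qed.

Lemma powR_neq (R : realType) (x y r : R) : 0 < x -> 0 < y -> r != 0 -> x != y -> x `^ r != y `^ r.
Proof.
move=> x0 y0 r0 xy; apply: contra_neq xy.
rewrite /powR !gt_eqF // => /expR_inj /(mulfI r0) e.
by apply: ln_inj; rewrite ?posrE.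
Qed.

Lemma sq_pow (R : realType) (l u : R) : 0 <= l -> (l `^ u) ^+ 2 = l `^ (u * 2).
Proof. by move=> l0; rewrite -powR_mulrn ?powR_ge0 // -powRrM. Qed.

Lemma powR_S (R : realType) (l u : R) : 0 < l -> l `^ (u + 1) = l `^ u * l.
Proof. move=> l0; have l0' := ltW l0; rewrite powRD ?powRr1 //. by apply/implyP => _; rewrite gt_eqF. Qed.

Section Main.
Variables (R : realType) (d : nat) (p q : 'I_d -> R) (Om : {set 'I_d}) (a : R).
Hypotheses (hp : prob_vec p) (hq : prob_vec q) (pneq : p <> q)
  (H0 : forall w, w \in Om -> (\sum_(i in Om) q i) * p w = (\sum_(i in Om) p i) * q w)
  (H1 : forall w, w \in ~: Om -> (\sum_(i in ~: Om) q i) * p w = (\sum_(i in ~: Om) p i) * q w)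
  (nP0 : \sum_(i in Om) p i != 0) (nQ0 : \sum_(i in Om) q i != 0)
  (nP1 : \sum_(i in ~: Om) p i != 0) (nQ1 : \sum_(i in ~: Om) q i != 0)
  (ha : 0 < a < 1).

Local Notation P0 := (\sum_(i in Om) p i).
Local Notation P1 := (\sum_(i in ~: Om) p i).
Local Notation Q0 := (\sum_(i in Om) q i).
Local Notation Q1 := (\sum_(i in ~: Om) q i).

Lemma p_ge0 i : 0 <= p i. Proof. by case: hp. Qed.
Lemma q_ge0 i : 0 <= q i. Proof. by case: hq. Qed.

Lemma sum_split (F : 'I_d -> R) : \sum_i F i = \sum_(i in Om) F i + \sum_(i in ~: Om) F i.
Proof.
rewrite (bigID (fun i => i \in Om)) /=; congr (_ + _).
by apply: eq_bigl => i; rewrite !inE.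
Qed.

Lemma P0_gt0 : 0 < P0. Proof. by rewrite lt_def nP0 sumr_ge0 // => i _; exact: p_ge0. Qed.
Lemma P1_gt0 : 0 < P1. Proof. by rewrite lt_def nP1 sumr_ge0 // => i _; exact: p_ge0. Qed.
Lemma Q0_gt0 : 0 < Q0. Proof. by rewrite lt_def nQ0 sumr_ge0 // => i _; exact: q_ge0. Qed.
Lemma Q1_gt0 : 0 < Q1. Proof. by rewrite lt_def nQ1 sumr_ge0 // => i _; exact: q_ge0. Qed.
Lemma P01 : P0 + P1 = 1. Proof. by rewrite -sum_split; case: hp. Qed.
Lemma Q01 : Q0 + Q1 = 1. Proof. by rewrite -sum_split; case: hq. Qed.

Definition l0 := P0 / Q0.
Definition l1 := P1 / Q1.
Definition lam i := if i \in Om then l0 else l1.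

Lemma l0_gt0 : 0 < l0. Proof. by rewrite divr_gt0 ?P0_gt0 ?Q0_gt0. Qed.
Lemma l1_gt0 : 0 < l1. Proof. by rewrite divr_gt0 ?P1_gt0 ?Q1_gt0. Qed.
Lemma lam_ge0 i : 0 <= lam i. Proof. by rewrite /lam; case: ifP => _; rewrite ltW ?l0_gt0 ?l1_gt0. Qed.
Lemma lam_gt0 i : 0 < lam i. Proof. by rewrite /lam; case: ifP => _; rewrite ?l0_gt0 ?l1_gt0. Qed.

Lemma p_lam i : p i = lam i * q i.
Proof.
rewrite /lam /l0 /l1; case: ifP => hi.
  by rewrite mulrAC -(H0 i hi) mulrAC mulfV ?mul1r.
have hi' : i \in ~: Om by rewrite !inE hi.
by rewrite mulrAC -(H1 i hi') mulrAC mulfV ?mul1r.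
Qed.

Lemma l0Q0 : l0 * Q0 = P0. Proof. by rewrite /l0 divfK. Qed.
Lemma l1Q1 : l1 * Q1 = P1. Proof. by rewrite /l1 divfK. Qed.

Definition S u := l0 `^ u * Q0 + l1 `^ u * Q1.

Lemma S_gt0 u : 0 < S u.
Proof. by rewrite addr_gt0 // mulr_gt0 ?powR_gt0 ?l0_gt0 ?l1_gt0 ?Q0_gt0 ?Q1_gt0. Qed.

Lemma S_eq u : \sum_i lam i `^ u * q i = S u.
Proof.
rewrite sum_split /S !mulr_sumr; congr (_ + _); apply: eq_bigr => i hi; rewrite /lam.
  by rewrite hi.
by move: hi; rewrite !inE => /negbTE ->.
Qed.

Lemma l0_neq_l1 : l0 != l1.
Proof.
apply/eqP => e; apply: pneq; apply/funext => i.
have lam_c j : lam j = l0 by rewrite /lam e; case: ifP.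
have l01 : l0 = 1.
  have := congr1 (fun F => F) (S_eq 1).
  have -> : \sum_i lam i `^ 1 * q i = l0 * \sum_i q i.
    by rewrite mulr_sumr; apply: eq_bigr => j _; rewrite lam_c powRr1 // ltW // l0_gt0.
  rewrite /S -e powRr1 ?ltW ?l0_gt0 // -mulrDr Q01 mulr1.
  case: hq => _ -> .
  have : \sum_j p j = l0 * \sum_j q j.
    by rewrite mulr_sumr; apply: eq_bigr => j _; rewrite p_lam lam_c.
  by case: hp => _ ->; case: hq => _ ->; rewrite mulr1.
by rewrite p_lam lam_c l01 mul1r.
Qed.


Lemma S_strict1 : S (a / 2) ^+ 2 < S a.
Proof.
have a0 : 0 < a by case/andP: ha.
set y0 := l0 `^ (a / 2); set y1 := l1 `^ (a / 2).
have -> : S (a / 2) = Q0 * y0 + Q1 * y1 by rewrite /S mulrC [l1 `^ _ * _]mulrC.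
have -> : S a = Q0 * y0 ^+ 2 + Q1 * y1 ^+ 2.
  by rewrite /y0 /y1 !sq_pow ?ltW ?l0_gt0 ?l1_gt0 // divfK ?pnatr_eq0 // /S mulrC [l1 `^ _ * _]mulrC.
apply: var_ineq; rewrite ?Q0_gt0 ?Q1_gt0 ?Q01 //.
by apply: powR_neq; rewrite ?l0_gt0 ?l1_gt0 ?l0_neq_l1 // mulf_neq0 ?gt_eqF ?invr_gt0 ?ltr0n.
Qed.

Lemma S_strict2 : S ((1 + a) / 2) ^+ 2 < S a.
Proof.
have a1 : a < 1 by case/andP: ha.
set z0 := l0 `^ ((a - 1) / 2); set z1 := l1 `^ ((a - 1) / 2).
have e1 : (1 + a) / 2 = (a - 1) / 2 + 1 by field.
have -> : S ((1 + a) / 2) = P0 * z0 + P1 * z1.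
  rewrite /S e1 !powR_S ?l0_gt0 ?l1_gt0 // -[l0 `^ _ * l0 * _]mulrA -[l1 `^ _ * l1 * _]mulrA l0Q0 l1Q1.
  by rewrite mulrC [z1 * _]mulrC.
have -> : S a = P0 * z0 ^+ 2 + P1 * z1 ^+ 2.
  rewrite /z0 /z1 !sq_pow ?ltW ?l0_gt0 ?l1_gt0 // divfK ?pnatr_eq0 //.
  have ea : a = (a - 1) + 1 by ring.
  rewrite /S [in LHS]ea !powR_S ?l0_gt0 ?l1_gt0 // -[l0 `^ _ * l0 * _]mulrA -[l1 `^ _ * l1 * _]mulrA l0Q0 l1Q1.
  by rewrite mulrC [_ * P1]mulrC.
apply: var_ineq; rewrite ?P0_gt0 ?P1_gt0 ?P01 //.
apply: powR_neq; rewrite ?l0_gt0 ?l1_gt0 ?l0_neq_l1 // mulf_neq0 ?invr_eq0 ?pnatr_eq0 //.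
by rewrite subr_eq0 lt_eqF.
Qed.

Definition c1 := (2 - a) * ln (S a) - 2 * (1 - a) * ln (S (a / 2)).
Definition c2 := (1 + a) * ln (S a) - 2 * a * ln (S ((1 + a) / 2)).

Lemma c1_gt : ln (S a) < c1.
Proof.
have a1 : a < 1 by case/andP: ha.
have h : 2 * ln (S (a / 2)) < ln (S a).
  by rewrite mulr_natl -lnXn ?S_gt0 // ltr_ln ?posrE ?exprn_gt0 ?S_gt0 // S_strict1.
have h' : 0 < (1 - a) * (ln (S a) - 2 * ln (S (a / 2))) by rewrite mulr_gt0 // subr_gt0.
rewrite /c1; lra.
Qed.

Lemma c2_gt : ln (S a) < c2.
Proof.
have a0 : 0 < a by case/andP: ha.
have h : 2 * ln (S ((1 + a) / 2)) < ln (S a).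
  by rewrite mulr_natl -lnXn ?S_gt0 // ltr_ln ?posrE ?exprn_gt0 ?S_gt0 // S_strict2.
have h' : 0 < a * (ln (S a) - 2 * ln (S ((1 + a) / 2))) by rewrite mulr_gt0 // subr_gt0.
rewrite /c2; lra.
Qed.

Lemma Dcl_pq : Dcl a p q = ((a - 1)^-1 * ln (S a))%:E.
Proof.
rewrite /Dcl.
have -> : \sum_i (p i `^ a * q i `^ (1 - a)) = S a.
  rewrite -S_eq; apply: eq_bigr => i _.
  by have := ff_prop R a _ _ (lam_ge0 i) (q_ge0 i); rewrite /ff -p_lam.
by rewrite gt_eqF ?S_gt0.
Qed.

Definition Pn k := tp R d p k.
Definition Qn k := tp R d q k.
Definition Kn k := tK d Om k.

Lemma Pn_ge0 k x : 0 <= Pn k x. Proof. by apply: tp_ge0 => i; exact: p_ge0. Qed.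
Lemma Qn_ge0 k x : 0 <= Qn k x. Proof. by apply: tp_ge0 => i; exact: q_ge0. Qed.
Lemma tplam_ge0 k x : 0 <= tp R d lam k x. Proof. by apply: tp_ge0 => i; exact: lam_ge0. Qed.

Lemma Pn_lam k x : Pn k x = tp R d lam k x * Qn k x.
Proof. by rewrite /Pn (@tp_ext R d p (fun i => lam i * q i) k x p_lam) tp_mul. Qed.

Lemma sumPn k : \sum_x Pn k x = 1.
Proof. by rewrite /Pn tp_sum; case: hp => _ ->; rewrite expr1n. Qed.
Lemma sumQn k : \sum_x Qn k x = 1.
Proof. by rewrite /Qn tp_sum; case: hq => _ ->; rewrite expr1n. Qed.

Lemma tplam_K k x : tp R d lam k x = l0 ^+ Kn k x * l1 ^+ (k.+1 - Kn k x).
Proof. exact: (tp_ind R d Om l0 l1 k x). Qed.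

Lemma sum_u k u : \sum_x (tp R d lam k x) `^ u * Qn k x = S u ^+ k.+1.
Proof.
rewrite (eq_bigr (fun x => tp R d (fun i => lam i `^ u * q i) k x)); last first.
  by move=> x _; rewrite tp_mul tp_powR // => i; exact: lam_ge0.
by rewrite tp_sum S_eq.
Qed.

Definition Ov k (T : 'M[R[i]]_(d ^ k.+1)) :=
  ff R a (\sum_x Pn k x * complex.Re (T x x)) (\sum_x Qn k x * complex.Re (T x x)) +
  ff R a (\sum_x Pn k x * (1 - complex.Re (T x x))) (\sum_x Qn k x * (1 - complex.Re (T x x))).

Lemma w01 n (T : 'M[R[i]]_n) x : is_test T -> 0 <= complex.Re (T x x) <= 1.
Proof. by case=> h1 h2; rewrite psd_Re // psd_Re1. Qed.

Lemma Ov_geA k T : is_test T -> S a ^+ k.+1 <= Ov k T.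
Proof.
move=> hT.
have e : \sum_x ff R a (Pn k x) (Qn k x) = S a ^+ k.+1.
  rewrite -sum_u; apply: eq_bigr => x _.
  by rewrite Pn_lam ff_prop ?tplam_ge0 ?Qn_ge0.
rewrite -e; exact: (dproc R a ha _ (Pn k) (Qn k) (fun x => complex.Re (T x x)) (Pn_ge0 k) (Qn_ge0 k) (fun x => w01 _ _ x hT)).
Qed.

Lemma Ov_gt0 k T : is_test T -> 0 < Ov k T.
Proof. by move=> hT; apply: lt_le_trans (Ov_geA _ _ hT); rewrite exprn_gt0 ?S_gt0. Qed.

Lemma Dcl_bool (f g : bool -> R) : Dcl a f g =
  let s := ff R a (f true) (g true) + ff R a (f false) (g false) in
  if s == 0 then +oo%E else ((a - 1)^-1 * ln s)%:E.
Proof. by rewrite /Dcl big_bool. Qed.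

Lemma Dcl_test k T : is_test T ->
  Dcl a (test_meas (diag_state (Pn k)) T) (test_meas (diag_state (Qn k)) T) =
  ((a - 1)^-1 * ln (Ov k T))%:E.
Proof.
move=> hT; have hO := Ov_gt0 _ _ hT; move: hO; rewrite /Ov => hO.
rewrite Dcl_bool.
have [-> ->] := test_meas_diag R _ (Pn k) T.
have [-> ->] := test_meas_diag R _ (Qn k) T.
by rewrite /= (gt_eqF hO).
Qed.

Lemma am1_lt0 : (a - 1)^-1 < 0.
Proof. by rewrite invr_lt0 subr_lt0; case/andP: ha. Qed.

Lemma Dtest_A k : (Dtest a (diag_state p ^t k.+1) (diag_state q ^t k.+1) <=
  ((a - 1)^-1 * (k.+1%:R * ln (S a)))%:E)%E.
Proof.
rewrite !tp_diag /Dtest; apply: ub_ereal_sup => _ [T hT <-].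
rewrite (Dcl_test _ _ hT) lee_fin ler_nM2l ?am1_lt0 //.
rewrite mulr_natl -lnXn ?S_gt0 // ler_ln ?posrE ?exprn_gt0 ?S_gt0 ?Ov_gt0 //.
exact: Ov_geA.
Qed.

Lemma Ov_lbB k T : is_test T ->
  k.+1%:R * Num.min c1 c2 - 2 * ln (k.+2%:R : R) - ln 2 <= ln (Ov k T).
Proof.
move=> hT.
pose rho (j : 'I_k.+2) := l0 ^+ j * l1 ^+ (k.+1 - j).
pose b (j : 'I_k.+2) := \sum_(x | inord (Kn k x) == j) Qn k x.
have Ksm x : (Kn k x < k.+2)%N by rewrite ltnS; exact: tK_le.
have rhoK x : rho (inord (Kn k x)) = tp R d lam k x by rewrite /rho inordK // tplam_K.
have sums u : \sum_j rho j `^ u * b j = S u ^+ k.+1.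
  rewrite -sum_u (partition_big (fun x => inord (Kn k x) : 'I_k.+2) xpredT) //=.
  apply: eq_bigr => j _; rewrite /b mulr_sumr; apply: eq_bigr => x /eqP <-.
  by rewrite rhoK.
have rho0 j : 0 <= rho j by rewrite mulr_ge0 // exprn_ge0 // ltW ?l0_gt0 ?l1_gt0.
have b0 j : 0 <= b j by rewrite sumr_ge0 // => x _; exact: Qn_ge0.
have [j [rj0 [bj0 [hj1 hj2]]]] := pick_class R a ha (k.+2) (k.+1) rho b (S a) (S (a / 2))
  (S ((1 + a) / 2)) isT rho0 b0 (S_gt0 _) (S_gt0 _) (S_gt0 _) (sums _) (sums _) (sums _).
have HA x : inord (Kn k x) == j -> Pn k x = rho j * Qn k x.
  by move=> /eqP <-; rewrite Pn_lam rhoK.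
have := class_bound R a ha _ (Pn k) (Qn k) (fun x => complex.Re (T x x))
  (fun x => inord (Kn k x) == j) (rho j) (Pn_ge0 k) (Qn_ge0 k) (fun x => w01 _ _ x hT)
  (sumPn k) (sumQn k) (ltW rj0) HA.
rewrite -/(b j) => /= H.
have O0 := Ov_gt0 _ _ hT.
have a0 : 0 < a by case/andP: ha.
have a1 : a < 1 by case/andP: ha.
have n0 : 0 <= (k.+1%:R : R) by [].
have ln2 : 0 <= ln (2 : R) by rewrite ln_ge0 // ler1n.
have hmin1 : k.+1%:R * Num.min c1 c2 <= k.+1%:R * c1 by rewrite ler_wpM2l // ge_min lexx.
have hmin2 : k.+1%:R * Num.min c1 c2 <= k.+1%:R * c2 by rewrite ler_wpM2l // ge_min lexx orbT.
have lnh (X : R) : 0 < X -> 2^-1 * X <= Ov k T -> - ln 2 + ln X <= ln (Ov k T).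
  move=> X0 hX; rewrite -ler_ln ?posrE ?mulr_gt0 ?invr_gt0 // in hX.
  by rewrite lnM ?posrE ?invr_gt0 // lnV ?posrE // in hX.
case: H => H.
  have := lnh _ (powR_gt0 _ (mulr_gt0 rj0 bj0)) H.
  rewrite ln_powR; move: hj1; rewrite -/c1; lra.
have := lnh _ (powR_gt0 _ bj0) H.
rewrite ln_powR; move: hj2; rewrite -/c2; lra.
Qed.

Lemma Dtest_B k : (Dtest a (diag_state p ^t k.+1) (diag_state q ^t k.+1) <=
  ((a - 1)^-1 * (k.+1%:R * Num.min c1 c2 - 2 * ln (k.+2%:R : R) - ln 2))%:E)%E.
Proof.
rewrite !tp_diag /Dtest; apply: ub_ereal_sup => _ [T hT <-].
rewrite (Dcl_test _ _ hT) lee_fin ler_nM2l ?am1_lt0 //.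
exact: Ov_lbB.
Qed.

Definition ind (i : 'I_d) : R := (i \in Om)%:R.

Lemma sum_ind : \sum_i p i * ind i = P0 /\ \sum_i q i * ind i = Q0.
Proof.
by split; rewrite [RHS]big_mkcond /=; apply: eq_bigr => i _; rewrite /ind;
  case: (i \in Om); rewrite ?mulr1 ?mulr0.
Qed.

Lemma sum_ind' : \sum_i p i * (1 - ind i) = P1 /\ \sum_i q i * (1 - ind i) = Q1.
Proof.
by split; rewrite [RHS]big_mkcond /=; apply: eq_bigr => i _; rewrite /ind !inE;
  case: (i \in Om); rewrite /= ?subrr ?subr0 ?mulr1 ?mulr0.
Qed.

Lemma Dtest1 : (((a - 1)^-1 * ln (S a))%:E <= Dtest a (diag_state p ^t 1) (diag_state q ^t 1))%E.
Proof.
rewrite (tp_diag R d p 0) (tp_diag R d q 0) /Dtest.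
have ind01 x : 0 <= tp R d ind 0 x <= 1.
  by rewrite tp0 /ind; case: (x \in Om); rewrite ?ler01 ?lexx.
have hT : is_test (diag_state (tp R d ind 0)).
  split; first by apply: psd_diag => x; case/andP: (ind01 x).
  rewrite diag_state_sub; apply: psd_diag => x; rewrite subr_ge0; by case/andP: (ind01 x).
apply: ereal_sup_ubound; exists (diag_state (tp R d ind 0)) => //.
rewrite (Dcl_test _ _ hT); congr ((_ * ln _)%:E).
rewrite /Ov.
have Re_d x : complex.Re (diag_state (tp R d ind 0) x x) = tp R d ind 0 x.
  by rewrite !mxE eqxx mulr1n.
under eq_bigr => x _ do rewrite Re_d.
under [X in ff _ _ _ X + _]eq_bigr => x _ do rewrite Re_d.
under [X in _ + ff _ _ X _]eq_bigr => x _ do rewrite Re_d.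
under [X in _ + ff _ _ _ X]eq_bigr => x _ do rewrite Re_d.
rewrite /Pn /Qn.
rewrite [X in ff _ _ X _ + _](eq_bigr (fun x => tp R d (fun i => p i * ind i) 0 x)); last by move=> x _; rewrite !tp0.
rewrite [X in ff _ _ _ X + _](eq_bigr (fun x => tp R d (fun i => q i * ind i) 0 x)); last by move=> x _; rewrite !tp0.
rewrite [X in _ + ff _ _ X _](eq_bigr (fun x => tp R d (fun i => p i * (1 - ind i)) 0 x)); last by move=> x _; rewrite !tp0.
rewrite [X in _ + ff _ _ _ X](eq_bigr (fun x => tp R d (fun i => q i * (1 - ind i)) 0 x)); last by move=> x _; rewrite !tp0.
rewrite !tp_sum !expr1.
have [-> ->] := sum_ind; have [-> ->] := sum_ind'.
by rewrite /S -l0Q0 -l1Q1 !ff_prop ?ltW ?l0_gt0 ?l1_gt0 ?Q0_gt0 ?Q1_gt0.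
Qed.

Lemma hat_eq : Dtest_hat a (diag_state p) (diag_state q) = Dcl a p q.
Proof.
rewrite Dcl_pq; apply/le_anti/andP; split.
  apply: ub_ereal_sup => _ [[|k] hn <-] //.
  apply: le_trans (lee_wpmul2l _ (Dtest_A k)) _; first by rewrite lee_fin invr_ge0.
  rewrite -EFinM lee_fin le_eqVlt; apply/orP; left; apply/eqP.
  by rewrite mulrCA mulKf ?pnatr_eq0.
apply: (@le_trans _ _ (((1%:R)^-1)%:E * Dtest a (diag_state p ^t 1) (diag_state q ^t 1))%E).
  by rewrite invr1 mul1e; exact: Dtest1.
by apply: ereal_sup_ubound; exists 1%N.
Qed.

Lemma bar_lt : (Dtest_bar a (diag_state p) (diag_state q) < Dtest_hat a (diag_state p) (diag_state q))%E.
Proof.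
rewrite hat_eq Dcl_pq.
set L := ln (S a); set c := Num.min c1 c2.
have cL : L < c by rewrite lt_min c1_gt c2_gt.
set eps := (c - L) / 2.
have eps0 : 0 < eps by rewrite divr_gt0 // subr_gt0.
have [N HN] := ln_small R (eps / 3) (divr_gt0 eps0 (ltr0n _ 3)).
have A0 := am1_lt0.
apply: (le_lt_trans (limsup_le R _ ((a - 1)^-1 * (c - eps))%:E N.+1 _)); last first.
  by rewrite lte_fin ltr_nM2l // /eps; lra.
move=> [|k] hk //.
apply: le_trans (lee_wpmul2l _ (Dtest_B k)) _; first by rewrite lee_fin invr_ge0.
rewrite -EFinM lee_fin.
have hln := HN k.+1 (ltnW hk).
have l2 : ln (2 : R) <= ln (k.+2%:R : R) by rewrite ler_ln ?posrE ?ltr0n // ler_nat.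
have n0 : 0 < (k.+1%:R : R) by rewrite ltr0n.
set X := k.+1%:R * c - 2 * ln (k.+2%:R : R) - ln 2.
have hX : (c - eps) * k.+1%:R <= X by rewrite /X; lra.
have hX' : c - eps <= X / k.+1%:R by rewrite ler_pdivlMr.
rewrite mulrCA ler_nM2l // mulrC.
exact: hX'.
Qed.

End Main.



Theorem mainTheorem3 (R : realType) :
  (forall (d : nat) (p q : 'I_d -> R) (Omega0 : {set 'I_d}) (a : R),
    prob_vec p -> prob_vec q -> p <> q ->
    (forall w, w \in Omega0 ->
       (\sum_(i in Omega0) q i) * p w = (\sum_(i in Omega0) p i) * q w) ->
    (forall w, w \in ~: Omega0 ->
       (\sum_(i in ~: Omega0) q i) * p w = (\sum_(i in ~: Omega0) p i) * q w) ->
    \sum_(i in Omega0) p i != 0 -> \sum_(i in Omega0) q i != 0 ->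
    \sum_(i in ~: Omega0) p i != 0 -> \sum_(i in ~: Omega0) q i != 0 ->
    0 < a < 1 ->
    (Dtest_bar a (diag_state p) (diag_state q)
       < Dtest_hat a (diag_state p) (diag_state q))%E /\
    Dtest_hat a (diag_state p) (diag_state q) = Dcl a p q) /\
  (forall (p q : 'I_2 -> R) (a : R),
    prob_vec p -> prob_vec q -> (forall i, 0 < p i) -> (forall i, 0 < q i) ->
    p <> q -> 0 < a < 1 ->
    (Dtest_bar a (diag_state p) (diag_state q)
       < Dtest_hat a (diag_state p) (diag_state q))%E /\
    Dtest_hat a (diag_state p) (diag_state q) = Dcl a p q).
Proof.
have part1 : forall (d : nat) (p q : 'I_d -> R) (Omega0 : {set 'I_d}) (a : R),
    prob_vec p -> prob_vec q -> p <> q ->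
    (forall w, w \in Omega0 ->
       (\sum_(i in Omega0) q i) * p w = (\sum_(i in Omega0) p i) * q w) ->
    (forall w, w \in ~: Omega0 ->
       (\sum_(i in ~: Omega0) q i) * p w = (\sum_(i in ~: Omega0) p i) * q w) ->
    \sum_(i in Omega0) p i != 0 -> \sum_(i in Omega0) q i != 0 ->
    \sum_(i in ~: Omega0) p i != 0 -> \sum_(i in ~: Omega0) q i != 0 ->
    0 < a < 1 ->
    (Dtest_bar a (diag_state p) (diag_state q)
       < Dtest_hat a (diag_state p) (diag_state q))%E /\
    Dtest_hat a (diag_state p) (diag_state q) = Dcl a p q.
  move=> d p q Om a hp hq pneq H0 H1 nP0 nQ0 nP1 nQ1 ha.
  split; first exact: (bar_lt _ _ _ _ _ _ hp hq pneq H0 H1 nP0 nQ0 nP1 nQ1 ha).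
  exact: (hat_eq _ _ _ _ _ _ hp hq H0 H1 nP0 nQ0 nP1 nQ1 ha).
split; first exact: part1.
move=> p q a hp hq pp qp pneq ha.
have eC : ~: [set ord0] = [set ord_max] :> {set 'I_2}.
  by apply/setP => i; rewrite !inE; case: i => [[|[|]]] //.
apply: (part1 2 p q [set ord0] a) => //.
- by move=> w; rewrite inE => /eqP ->; rewrite !big_set1 mulrC.
- by move=> w; rewrite eC inE => /eqP ->; rewrite !big_set1 mulrC.
- by rewrite big_set1 gt_eqF.
- by rewrite big_set1 gt_eqF.
- by rewrite eC big_set1 gt_eqF.
- by rewrite eC big_set1 gt_eqF.
Qed.
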